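(* Let $D$ be a rooted hyperbolic digraph with root $o$, constant out-degree and bounded in-degree. Let $g$ be an elliptic self-embedding of $D$ and let $n\in\mathbb{N}$. Then there exists an integer $i\ge1$ such that $g^i$ fixes every vertex of $\mathcal{B}^+_n(o)\cup\mathcal{B}^-_n(o)$.
   Context: A directed path $x_0\ldots x_n$ has edges $x_ix_{i+1}$; $d(x,y)$ is the length of a shortest directed $x$-$y$ path ($\infty$ if none), called an $x$-$y$ geodesic. $D$ is rooted with root $o$ if $d(o,v)<\infty$ for all $v$. $\mathcal{B}^+_k(x)=\{y:d(x,y)\le k\}$, $\mathcal{B}^-_k(x)=\{y:d(y,x)\le k\}$, extended to sets by unions. A geodesic triangle consists of three vertices and for each pair a geodesic between them (in one direction); it is $\delta$-thin if whenever $P,Q,R$ are its sides with the start of $P$ being the start or end of $Q$ and the end of $P$ being the start or end of $R$, $P\subseteq\mathcal{B}^+_\delta(Q)\cup\mathcal{B}^-_\delta(R)$; $D$ is hyperbolic if for some $\delta\ge0$ all geodesic triangles are $\delta$-thin. A self-embedding is an injective $g:V(D)\to V(D)$ with $xy\in E(D)\iff g(x)g(y)\in E(D)$; it is elliptic if $g(F)=F$ for some nonempty finite vertex set $F$. *)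

(* Defs.v *)
From Stdlib Require Import List Arith Lia.
Import ListNotations.
Set Implicit Arguments.

Section Digraphs.
Variable V : Type.
Variable E : V -> V -> Prop.

Inductive walk : list V -> Prop :=
| walk_one : forall x, walk [x]
| walk_cons : forall x y p, E x y -> walk (y :: p) -> walk (x :: y :: p).

(* p is a directed x-y path; its length is (length p - 1). *)
Definition dpath (x y : V) (p : list V) : Prop :=
  walk p /\ hd_error p = Some x /\ hd_error (rev p) = Some y.

Definition dist_le (x y : V) (k : nat) : Prop :=
  exists p, dpath x y p /\ length p <= S k.

Definition geodesic (x y : V) (p : list V) : Prop :=
  dpath x y p /\ forall q, dpath x y q -> length p <= length q.

(* B^+_k(S) and B^-_k(S) for a set S given as a list of vertices *)
Definition in_Bout (k : nat) (S : list V) (v : V) : Prop :=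
  exists s, In s S /\ dist_le s v k.
Definition in_Bin (k : nat) (S : list V) (v : V) : Prop :=
  exists s, In s S /\ dist_le v s k.

Definition start (p : list V) : option V := hd_error p.
Definition finish (p : list V) : option V := hd_error (rev p).

Definition geodesic_between (x y : V) (p : list V) : Prop :=
  geodesic x y p \/ geodesic y x p.

Definition geo_triangle (x y z : V) (Pxy Pyz Pxz : list V) : Prop :=
  geodesic_between x y Pxy /\ geodesic_between y z Pyz /\
  geodesic_between x z Pxz.

(* the thinness condition for an ordered choice (P,Q,R) of the sides *)
Definition thin_sides (d : nat) (P Q R : list V) : Prop :=
  (start P = start Q \/ start P = finish Q) ->
  (finish P = start R \/ finish P = finish R) ->
  forall v, In v P -> in_Bout d Q v \/ in_Bin d R v.

Definition thin_triangle (d : nat) (P1 P2 P3 : list V) : Prop :=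
  thin_sides d P1 P2 P3 /\ thin_sides d P1 P3 P2 /\
  thin_sides d P2 P1 P3 /\ thin_sides d P2 P3 P1 /\
  thin_sides d P3 P1 P2 /\ thin_sides d P3 P2 P1.

Definition hyperbolic : Prop :=
  exists d : nat, forall x y z P1 P2 P3,
    geo_triangle x y z P1 P2 P3 -> thin_triangle d P1 P2 P3.

Definition rooted_at (o : V) : Prop := forall v, exists k, dist_le o v k.

Definition const_outdeg : Prop :=
  exists k : nat, forall v, exists l : list V,
    NoDup l /\ length l = k /\ (forall w, In w l <-> E v w).

Definition bounded_indeg : Prop :=
  exists M : nat, forall v, exists l : list V,
    length l <= M /\ (forall w, E w v -> In w l).

Definition self_embedding (g : V -> V) : Prop :=
  (forall x y, g x = g y -> x = y) /\ (forall x y, E x y <-> E (g x) (g y)).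

(* g(F) = F for some nonempty finite F *)
Definition elliptic (g : V -> V) : Prop :=
  exists F : list V, F <> [] /\
    (forall x, In x F -> In (g x) F) /\
    (forall y, In y F -> exists x, In x F /\ g x = y).

End Digraphs.

(* Main.v *)
Require Import Defs.
From Stdlib Require Import List Arith Lia Classical.
Import ListNotations.

Section S.
Variable V : Type.
Variable E : V -> V -> Prop.

Lemma collect (P : V -> V -> Prop) :
  (forall w, exists l, forall v, P v w -> In v l) ->
  forall L, exists l', forall w v, In w L -> P v w -> In v l'.
Proof.
  intros H L; induction L as [|a L IH].
  - exists []; intros w v [].
  - destruct IH as [l1 H1]; destruct (H a) as [l2 H2].
    exists (l2 ++ l1); intros w v [<-|Hw] Hp; apply in_or_app; eauto.
Qed.

Lemma hd_rev_cons (x : V) l : l <> [] -> hd_error (rev (x :: l)) = hd_error (rev l).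
Proof.
  intros Hl; simpl. destruct (rev l) eqn:R.
  - apply (f_equal (@rev V)) in R; rewrite rev_involutive in R; simpl in R; congruence.
  - reflexivity.
Qed.

Lemma dist0 v s : dist_le E v s 0 -> v = s.
Proof.
  intros [p [[Hw [H1 H2]] Hl]].
  destruct p as [|x [|y q]]; simpl in *; try lia; congruence.
Qed.

Lemma distS v s k : dist_le E v s (S k) -> v = s \/ exists w, E v w /\ dist_le E w s k.
Proof.
  intros [p [[Hw [H1 H2]] Hl]].
  inversion Hw; subst.
  - simpl in *; left; congruence.
  - right. exists y; split.
    + simpl in H1; congruence.
    + exists (y :: p0); split; [split; [auto|split]|simpl in *; lia].
      * reflexivity.
      * rewrite hd_rev_cons in H2 by discriminate. exact H2.
Qed.

Lemma walk_map (g : V -> V) : (forall x y, E x y -> E (g x) (g y)) ->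
  forall p, walk E p -> walk E (map g p).
Proof.
  intros Hg p Hw; induction Hw; simpl; constructor; auto.
Qed.

Lemma hd_map (g : V -> V) l : hd_error (map g l) = option_map g (hd_error l).
Proof. destruct l; reflexivity. Qed.

Lemma dist_map (g : V -> V) : (forall x y, E x y -> E (g x) (g y)) ->
  forall u v k, dist_le E u v k -> dist_le E (g u) (g v) k.
Proof.
  intros Hg u v k [p [[Hw [H1 H2]] Hl]].
  exists (map g p); split; [split; [|split]|].
  - apply walk_map; auto.
  - rewrite hd_map, H1; reflexivity.
  - rewrite <- map_rev, hd_map, H2; reflexivity.
  - rewrite length_map; auto.
Qed.

Lemma ball_in : bounded_indeg E -> forall k S, exists L,
  forall s v, In s S -> dist_le E v s k -> In v L.
Proof.
  intros [M HM] k S; induction k as [|k IH].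
  - exists S; intros s v Hs Hd; apply dist0 in Hd; subst; auto.
  - destruct IH as [Lk HLk].
    destruct (collect (fun v w => E v w)) with (L := Lk) as [l' Hl'].
    { intros w; destruct (HM w) as [l [_ Hl]]; eauto. }
    exists (S ++ l'); intros s v Hs Hd; apply in_or_app.
    destruct (distS _ _ _ Hd) as [->|[w [Hvw Hw]]]; auto.
    right; eapply Hl'; eauto.
Qed.

Lemma ball_out : const_outdeg E -> forall k S, exists L,
  forall s v, In s S -> dist_le E s v k -> In v L.
Proof.
  intros [d Hd] k; induction k as [|k IH]; intros S.
  - exists S; intros s v Hs Hdd; apply dist0 in Hdd; subst; auto.
  - destruct (collect (fun v w => E w v)) with (L := S) as [N HN].
    { intros w; destruct (Hd w) as [l [_ [_ Hl]]]; exists l; intros v Hv; apply Hl; auto. }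
    destruct (IH N) as [L' HL'].
    exists (S ++ L'); intros s v Hs Hdd; apply in_or_app.
    destruct (distS _ _ _ Hdd) as [->|[w [Hvw Hw]]]; auto.
    right; eapply HL'; eauto.
Qed.

Fixpoint orb (g : V -> V) x N : list V :=
  match N with 0 => [] | S N' => Nat.iter N' g x :: orb g x N' end.

Lemma orb_in g x N y : In y (orb g x N) -> exists j, j < N /\ y = Nat.iter j g x.
Proof.
  induction N; simpl; [tauto|].
  intros [<-|H]; [exists N; split; auto|].
  destruct (IHN H) as [j [? ?]]; exists j; split; [lia|auto].
Qed.

Lemma iter_add (g : V -> V) a b x : Nat.iter (a + b) g x = Nat.iter a g (Nat.iter b g x).
Proof. induction a; simpl; congruence. Qed.

Lemma iter_inj (g : V -> V) : (forall x y, g x = g y -> x = y) ->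
  forall a x y, Nat.iter a g x = Nat.iter a g y -> x = y.
Proof. intros Hg a; induction a; simpl; auto. Qed.

Lemma iter_mul (g : V -> V) p x : Nat.iter p g x = x -> forall q, Nat.iter (q * p) g x = x.
Proof.
  intros H q; induction q; simpl; auto.
  rewrite iter_add, IHq; auto.
Qed.

Lemma fact_div N p : 1 <= p <= N -> exists q, fact N = q * p.
Proof.
  induction N; intros Hp; [lia|].
  destruct (Nat.eq_dec p (S N)) as [->|Hne].
  - exists (fact N); simpl; lia.
  - destruct IHN as [q Hq]; [lia|]. exists (S N * q). simpl fact. rewrite Hq; lia.
Qed.

Lemma periodic (g : V -> V) (X : V -> Prop) (L : list V) :
  (forall x y, g x = g y -> x = y) ->
  (forall x, X x -> X (g x)) -> (forall x, X x -> In x L) ->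
  exists i, 1 <= i /\ forall x, X x -> Nat.iter i g x = x.
Proof.
  intros Hinj HX HL.
  exists (fact (length L)); split; [apply lt_O_fact|].
  intros x Hx.
  assert (Hit : forall j, X (Nat.iter j g x)) by (induction j; simpl; auto).
  assert (Hdup : exists a b, a < b <= length L /\ Nat.iter a g x = Nat.iter b g x).
  { apply NNPP; intros Hn.
    assert (ND : forall N, N <= S (length L) -> NoDup (orb g x N)).
    { induction N; intros HN; simpl; constructor.
      - intros Hin; destruct (orb_in _ _ _ _ Hin) as [j [Hj Heq]].
        apply Hn; exists j, N; split; [lia|auto].
      - apply IHN; lia. }
    assert (Hlen : forall N, length (orb g x N) = N) by (induction N; simpl; auto).
    assert (Hinc : incl (orb g x (S (length L))) L).
    { intros y Hy; destruct (orb_in _ _ _ _ Hy) as [j [_ ->]]; auto. }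
    pose proof (NoDup_incl_length (ND _ (le_n _)) Hinc) as C.
    rewrite Hlen in C; lia. }
  destruct Hdup as [a [b [Hab Heq]]].
  replace b with (a + (b - a)) in Heq by lia.
  rewrite iter_add in Heq.
  apply iter_inj in Heq; auto.
  destruct (fact_div (length L) (b - a)) as [q Hq]; [lia|].
  rewrite Hq; apply iter_mul; auto.
Qed.
End S.

Theorem lemma3p14 (V : Type) (E : V -> V -> Prop) (o : V)
  (Hroot : rooted_at E o) (Hhyp : hyperbolic E)
  (Hout : const_outdeg E) (Hin : bounded_indeg E)
  (g : V -> V) (Hg : self_embedding E g) (Hell : elliptic g) (n : nat) :
  exists i : nat, 1 <= i /\
    forall v, (dist_le E o v n \/ dist_le E v o n) -> Nat.iter i g v = v.
Proof.
  destruct Hg as [Hinj HE].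
  destruct Hell as [F [HF [HgF _]]].
  destruct F as [|f0 F']; [congruence|].
  destruct (Hroot f0) as [m Hm].
  destruct (ball_in _ E Hin m (f0 :: F')) as [L1 HL1].
  destruct (ball_out _ E Hout n L1) as [L2 HL2].
  destruct (ball_in _ E Hin n L1) as [L3 HL3].
  assert (HEg : forall x y, E x y -> E (g x) (g y)) by (intros x y H; exact (proj1 (HE x y) H)).
  destruct (@periodic V E g (fun v => exists u, (exists f, In f (f0 :: F') /\ dist_le E u f m) /\
     (dist_le E u v n \/ dist_le E v u n)) (L2 ++ L3)) as [i [Hi Hp]]; auto.
  - intros x [u [[f [Hf Hd]] Hx]]. exists (g u); split.
    + exists (g f); split; auto. apply dist_map; auto.
    + destruct Hx; [left|right]; apply dist_map; auto.
  - intros x [u [[f [Hf Hd]] [Hx|Hx]]]; apply in_or_app; [left|right].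
    + eapply HL2; [eapply HL1; eauto|eauto].
    + eapply HL3; [eapply HL1; eauto|eauto].
  - exists i; split; auto. intros v Hv; apply Hp.
    exists o; split; [exists f0; split; [left; auto|auto]|auto].
Qed.
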